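(* Let $R_k(n)$ denote the number of distinct languages denoted by regular expressions of ordinary length exactly $n$ over a $k$-letter alphabet. Then $R_1(n) = \Omega(1.3247^n)$ and $R_2(n) = \Omega(2.102374^n)$ as $n \to \infty$.
   Context: A regular expression over a finite alphabet $\Sigma$ is a (syntactically valid) string over $\Sigma \cup \{+, *, (, ), \epsilon, \emptyset\}$ built in the usual way from the constants $\emptyset$, $\epsilon$ and $a \in \Sigma$ using union $+$, concatenation (written by juxtaposition) and Kleene star $*$, with parentheses, under the usual precedence rules (star binds tighter than concatenation, which binds tighter than union); it denotes a regular language in the standard way. The ordinary length of a regular expression is the total number of symbols in it, including parentheses, $\epsilon$, $\emptyset$ and operator symbols, counted with multiplicity (e.g. $(0+10)*(1+\epsilon)$ has ordinary length 12). *)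

(* Defs.v *)
From HB Require Import structures.
From mathcomp Require Import all_boot all_order all_algebra.
From mathcomp Require Import finmap.
From mathcomp Require Import boolp classical_sets cardinality.
Set Implicit Arguments. Unset Strict Implicit. Unset Printing Implicit Defensive.

(* Syntactically valid regular expressions over the alphabet 'I_k, as parse
   trees of the standard unambiguous precedence grammar
     E ::= E + T | T          (union, lowest precedence)
     T ::= T F | F            (concatenation)
     F ::= F * | A            (Kleene star, highest precedence)
     A ::= a | eps | empty | ( E )
   Parentheses are explicit (redundant ones allowed), so parse trees are in
   bijection with the syntactically valid strings. *)
Inductive rexp (k : nat) : Type :=
  | ESum  : rexp k -> rterm k -> rexp k
  | ETerm : rterm k -> rexp k
with rterm (k : nat) : Type :=
  | TCat  : rterm k -> rfact k -> rterm k
  | TFact : rfact k -> rterm k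
with rfact (k : nat) : Type :=
  | FStar : rfact k -> rfact k
  | FAtom : ratom k -> rfact k
with ratom (k : nat) : Type :=
  | ALet   : 'I_k -> ratom k
  | AEps   : ratom k
  | AEmpty : ratom k
  | AParen : rexp k -> ratom k.

(* Ordinary length: number of symbols of the string, counting parentheses,
   operator symbols '+' and '*', eps and empty (concatenation is juxtaposition,
   hence contributes no symbol). *)
Fixpoint len_e k (e : rexp k) : nat :=
  match e with
  | ESum e t => len_e e + 1 + len_t t
  | ETerm t => len_t t
  end
with len_t k (t : rterm k) : nat :=
  match t with
  | TCat t f => len_t t + len_f f
  | TFact f => len_f f
  end
with len_f k (f : rfact k) : nat :=
  match f with
  | FStar f => len_f f + 1
  | FAtom a => len_a a
  end
with len_a k (a : ratom k) : nat :=
  match a with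
  | ALet _ => 1
  | AEps => 1
  | AEmpty => 1
  | AParen e => len_e e + 2
  end.

Definition word k := seq 'I_k.
Definition language k := set (word k).

Definition lang_cat k (L1 L2 : language k) : language k :=
  fun w => exists u v, [/\ w = u ++ v, L1 u & L2 v].
Definition lang_star k (L : language k) : language k :=
  fun w => exists ws : seq (word k), w = flatten ws /\ (forall u, u \in ws -> L u).

Fixpoint sem_e k (e : rexp k) : language k :=
  match e with
  | ESum e t => fun w => sem_e e w \/ sem_t t w
  | ETerm t => sem_t t
  end
with sem_t k (t : rterm k) : language k :=
  match t with
  | TCat t f => lang_cat (sem_t t) (sem_f f)
  | TFact f => sem_f f
  end
with sem_f k (f : rfact k) : language k :=
  match f with
  | FStar f => lang_star (sem_f f)
  | FAtom a => sem_a a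
  end
with sem_a k (a : ratom k) : language k :=
  match a with
  | ALet x => fun w => w = [:: x]
  | AEps => fun w => w = [::]
  | AEmpty => fun _ => False
  | AParen e => sem_e e
  end.

(* R_k(n): number of distinct languages denoted by regular expressions of
   ordinary length exactly n over a k-letter alphabet. (The set is finite,
   so fset_set is its exact finite-set version.) *)
Definition Rcount (k n : nat) : nat :=
  #|` fset_set [set L : language k | exists e : rexp k, len_e e = n /\ sem_e e = L] |%fset.

(* Main.v *)
Require Import Defs.
From HB Require Import structures.
From mathcomp Require Import all_boot all_order all_algebra.
From mathcomp Require Import finmap.
From mathcomp Require Import boolp classical_sets cardinality.
From mathcomp Require Import zify ring lra.
Import Order.TTheory GRing.Theory Num.Theory.

Section FinPart.
Set Implicit Arguments. Unset Strict Implicit.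
Local Open Scope classical_set_scope.

Lemma len_f_pos k (f : rfact k) : (0 < len_f f)%N.
Proof. by case: f => [f|[x| | |e]] /=; rewrite ?addn1 ?addn2. Qed.

Lemma len_t_pos k (t : rterm k) : (0 < len_t t)%N.
Proof. case: t => [t f|f] /=; last exact: len_f_pos.
by rewrite (leq_trans (len_f_pos f)) // leq_addl. Qed.

Lemma fin_all k n :
  [/\ finite_set [set e : rexp k | (len_e e < n)%N],
      finite_set [set e : rterm k | (len_t e < n)%N],
      finite_set [set e : rfact k | (len_f e < n)%N] &
      finite_set [set e : ratom k | (len_a e < n)%N]].
Proof.
elim: n => [|n [IHe IHt IHf IHa]].
  by split; apply: (sub_finite_set _ (finite_set0 _)) => x /=.
have Ha : finite_set [set e : ratom k | (len_a e < n.+1)%N].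
  apply: (@sub_finite_set _ _ ((@ALet k @` setT) `|` [set AEps k; AEmpty k]
            `|` (@AParen k @` [set e | (len_e e < n)%N]))).
    move=> [x| | |e] /= H; [left;left; by exists x| left;right;left|left;right;right|right].
    by []. by []. exists e => //=. by rewrite /= -addn2 in H *; lia.
  rewrite !finite_setU; split; [split|]; last exact: finite_image.
    by apply: finite_image; apply: finite_finset.
  by split; apply: finite_set1.
have Hf : finite_set [set e : rfact k | (len_f e < n.+1)%N].
  apply: (@sub_finite_set _ _ ((@FStar k @` [set e | (len_f e < n)%N])
            `|` (@FAtom k @` [set e | (len_a e < n.+1)%N]))).
    move=> [f|a] /= H; [left; exists f => //=; lia| right; by exists a].
  by rewrite finite_setU; split; apply: finite_image.
have Ht : finite_set [set e : rterm k | (len_t e < n.+1)%N].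
  apply: (@sub_finite_set _ _ (((fun p => @TCat k p.1 p.2) @` ([set e | (len_t e < n)%N] `*` [set e | (len_f e < n.+1)%N]))
            `|` (@TFact k @` [set e | (len_f e < n.+1)%N]))).
    move=> [t f|f] /= H; [left; exists (t, f) => //=| right; by exists f].
    have := len_f_pos f; split => /=; lia.
  by rewrite finite_setU; split; apply: finite_image => //; apply: finite_setX.
split => //.
apply: (@sub_finite_set _ _ (((fun p => @ESum k p.1 p.2) @` ([set e | (len_e e < n)%N] `*` [set e | (len_t e < n.+1)%N]))
            `|` (@ETerm k @` [set e | (len_t e < n.+1)%N]))).
  move=> [e t|t] /= H; [left; exists (e, t) => //=| right; by exists t].
  have := len_t_pos t; split => /=; lia.
by rewrite finite_setU; split; apply: finite_image => //; apply: finite_setX.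
Qed.

Lemma fin_lang k n : finite_set [set L : language k | exists e : rexp k, len_e e = n /\ sem_e e = L].
Proof.
have [H _ _ _] := fin_all k n.+1.
apply: (@sub_finite_set _ _ (@sem_e k @` [set e : rexp k | (len_e e < n.+1)%N])); last exact: finite_image.
by move=> L [e [<- <-]]; exists e => //=.
Qed.

Lemma Rcount_ge k n (s : seq (language k)) : uniq s ->
  (forall L, L \in s -> exists e : rexp k, len_e e = n /\ sem_e e = L) ->
  (size s <= Rcount k n)%N.
Proof.
move=> us Hs; rewrite /Rcount; apply: uniq_leq_size => // L Ls.
by rewrite in_fset_set ?inE; [exact: Hs | exact: fin_lang].
Qed.

End FinPart.

Section CombPart.
Set Implicit Arguments. Unset Strict Implicit.

Definition shift k (c : 'I_k) (L : language k) : language k :=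
  lang_cat L (fun w => w = [:: c]).
Definition addeps k (L : language k) : language k := fun w => L w \/ w = [::].

Lemma shiftE k c (L : language k) w : shift c L w <-> exists u, w = rcons u c /\ L u.
Proof.
split; first by case=> u [v [-> Lu ->]]; exists u; rewrite cats1.
by case=> u [-> Lu]; exists u, [:: c]; rewrite cats1.
Qed.

Lemma shift_inj k c : injective (@shift k c).
Proof.
move=> L L' E; apply/funext => w; apply/propext; split => H.
  have h : shift c L (rcons w c) by (apply/shiftE; exists w).
  have := eq_ind _ (fun F => F (rcons w c)) h _ E.
  move=> /shiftE [u [eu Lu]]; by case: (rcons_inj eu) => ->.
have h : shift c L' (rcons w c) by (apply/shiftE; exists w).
have := eq_ind _ (fun F => F (rcons w c)) h _ (esym E).
move=> /shiftE [u [eu Lu]]; by case: (rcons_inj eu) => ->.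
Qed.

Lemma shift_nil k c (L : language k) : ~ shift c L [::].
Proof. by move=> /shiftE [u [/esym/eqP]]; rewrite -size_eq0 size_rcons. Qed.

Lemma addeps_inj k (L L' : language k) : ~ L [::] -> ~ L' [::] -> addeps L = addeps L' -> L = L'.
Proof.
move=> h h' E; apply/funext => w; apply/propext; split => H.
  have : addeps L w by left.
  rewrite E => -[//|ew]; by rewrite ew in H.
have : addeps L' w by left.
rewrite -E => -[//|ew]; by rewrite ew in H.
Qed.

Definition a0 : 'I_1 := ord0.

Fixpoint LS (n : nat) : seq (language 1) :=
  match n with
  | 0 => [::]
  | n'.+1 => if n' is 0 then [:: fun w => w = [:: a0]]
             else map (shift a0) (LS n' ++ match n' with p.+4 => map (@addeps 1) (LS p) | _ => [::] end)
  end.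

Lemma LS_real n L : L \in LS n -> exists t : rterm 1, len_t t = n /\ sem_t t = L.
Proof.
elim/ltn_ind: n L => -[|[|n]] IH L //=.
  by rewrite inE => /eqP ->; exists (TFact (FAtom (ALet a0))).
case/mapP => L' + ->; rewrite mem_cat => /orP[].
  move=> HL'; have [t [lt st]] := IH n.+1 (ltnSn _) L' HL'.
  exists (TCat t (FAtom (ALet a0))); split => //=.
  by rewrite lt addn1. by rewrite st.
case: n IH => [|[|[|[|p]]]] IH // /mapP [L'' HL'' ->].
have [|t [lt st]] := IH p.+1 _ L'' HL''; first by lia.
exists (TCat (TFact (FAtom (AParen (ESum (ETerm t) (TFact (FAtom (@AEps 1))))))) (FAtom (ALet a0))).
by rewrite /= lt; split => //; [lia | rewrite -st].
Qed.

Lemma LS_inv n : (forall L, L \in LS n -> ~ L [::]) /\ uniq (LS n).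
Proof.
elim/ltn_ind: n => -[|[|n]] IH //=.
  by split => // L; rewrite inE => /eqP ->.
split.
  by move=> L /mapP [L' _ ->]; apply: shift_nil.
rewrite map_inj_uniq; last exact: shift_inj.
have [H1 U1] := IH n.+1 (ltnSn _).
case: n IH H1 U1 => [|[|[|[|p]]]] IH H1 U1; rewrite ?cats0 //.
change (uniq (LS p.+4.+1 ++ map (@addeps 1) (LS p.+1))).
have [H2 U2] := IH p.+1 ltac:(lia).
rewrite cat_uniq U1 map_inj_in_uniq; last first.
  by move=> x y /H2 hx /H2 hy; apply: addeps_inj.
rewrite U2 andbT andTb; apply/hasPn => L /mapP [L' _ ->]; apply/negP => /H1; apply; by right.
Qed.

Lemma LS_S n : LS n.+2 = map (shift a0) (LS n.+1 ++ (if n.+1 is p.+4 then map (@addeps 1) (LS p) else [::])).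
Proof. by []. Qed.

Lemma size_LS n : (1 <= n)%N -> (1 <= size (LS n))%N /\
   (5 < n -> size (LS n) = size (LS n.-1) + size (LS (n - 5)))%N.
Proof.
elim: n => [//|[|n] IH] _; first by [].
rewrite LS_S size_map size_cat; have [IH1 IH2] := IH isT.
split; first by lia.
move=> Hn; clear IH IH1 IH2.
case: n Hn => [|[|[|[|p]]]] Hn //.
change (size (LS p.+4.+1) + size (map (@addeps 1) (LS p.+1)) = size (LS p.+4.+1) + size (LS p.+1))%N.
by rewrite size_map.
Qed.

Definition c0 : 'I_2 := ord0.
Definition c1 : 'I_2 := ord_max.
Definition zstar : language 2 := lang_star (fun w => w = [:: c0]).
Definition sstar (L : language 2) : language 2 := lang_cat (shift c1 L) zstar.

Fixpoint LB (m : nat) : seq (language 2) :=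
  match m with
  | 0 => [:: fun w => w = [:: c0]]
  | m'.+1 => map (shift c0) (LB m') ++ map (shift c1) (LB m') ++
             (if m' is p.+2 then map sstar (LB p) else [::])
  end.

Lemma LB_real m L : L \in LB m -> exists t : rterm 2, len_t t = m.+1 /\ sem_t t = L.
Proof.
elim/ltn_ind: m L => -[|m] IH L /=.
  by rewrite inE => /eqP ->; exists (TFact (FAtom (ALet c0))).
rewrite !mem_cat => /orP[|/orP[]].
- case/mapP => L' HL' ->; have [t [lt st]] := IH m (ltnSn _) L' HL'.
  exists (TCat t (FAtom (ALet c0))); split => //=.
  by rewrite lt addn1. by rewrite st.
- case/mapP => L' HL' ->; have [t [lt st]] := IH m (ltnSn _) L' HL'.
  exists (TCat t (FAtom (ALet c1))); split => //=.
  by rewrite lt addn1. by rewrite st.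
case: m IH => [|[|p]] IH //= /mapP [L' HL' ->].
have [|t [lt st]] := IH p _ L' HL'; first by lia.
exists (TCat (TCat t (FAtom (ALet c1))) (FStar (FAtom (ALet c0)))).
by rewrite /= lt; split => //; [lia | rewrite -st].
Qed.

Lemma zstar_nseq v : zstar v -> v = nseq (size v) c0.
Proof.
case=> ws [-> H]; elim: ws H => [//|u ws IH] H /=.
have IH' : flatten ws = nseq (size (flatten ws)) c0.
  by apply: IH => x xws; apply: H; rewrite inE xws orbT.
by rewrite (H u (mem_head _ _)) /= {1}IH'.
Qed.

Lemma zstar_nil : zstar [::].
Proof. by exists [::]. Qed.

Lemma zstar_c0 : zstar [:: c0].
Proof. by exists [:: [:: c0]]; split => // u; rewrite inE => /eqP ->. Qed.

Lemma shift_last k c (L : language k) w x : shift c L w -> last x w = c.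
Proof. by case/shiftE => u [-> _]; rewrite last_rcons. Qed.

Lemma sstar_base L w : L w -> sstar L (rcons w c1).
Proof.
move=> Lw; exists (rcons w c1), [::]; rewrite cats0; split => //.
  by apply/shiftE; exists w.
exact: zstar_nil.
Qed.

Lemma sstar_c0 L w : L w -> sstar L (rcons (rcons w c1) c0).
Proof.
move=> Lw; exists (rcons w c1), [:: c0]; rewrite cats1; split => //.
  by apply/shiftE; exists w.
exact: zstar_c0.
Qed.

Lemma sstar_inj : injective sstar.
Proof.
have key : forall L L', sstar L = sstar L' -> forall w, L w -> L' w.
  move=> L L' E w Lw.
  have := sstar_base Lw.
  rewrite E => -[u [v [ew /shiftE [u' [eu Lu']] /zstar_nseq ev]]].
  move: ew; rewrite eu ev; case: (size v) => [|k].
    by rewrite cats0 => /rcons_inj [->].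
  move/(congr1 (last c0)); rewrite last_rcons last_cat /=.
  by elim: k => [|k IHk] //=.
by move=> L L' E; apply/funext => w; apply/propext; split; apply: key.
Qed.

Lemma LB_inv m : (forall L, L \in LB m -> exists w, L w) /\ uniq (LB m).
Proof.
elim/ltn_ind: m => -[|m] IH /=.
  by split => // L; rewrite inE => /eqP ->; exists [:: c0].
have [H1 U1] := IH m (ltnSn _).
have ne_sh : forall c L, L \in LB m -> exists w, shift c L w.
  by move=> c L /H1 [w Lw]; exists (rcons w c); apply/shiftE; exists w.
split.
  move=> L; rewrite !mem_cat => /orP[/mapP [L' HL' ->]|/orP[/mapP [L' HL' ->]|]]; try exact: ne_sh.
  case: m IH H1 U1 ne_sh => [|[|p]] IH H1 U1 ne_sh // /mapP [L' HL' ->].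
  have [H2 _] := IH p ltac:(lia); have [w Lw] := H2 _ HL'.
  by exists (rcons w c1); apply: sstar_base.
have d01 : ~~ has (mem (map (shift c0) (LB m))) (map (shift c1) (LB m)).
  apply/hasPn => L /mapP [L1 H1L1 ->]; apply/negP => /mapP [L2 H2L2 E].
  have [w sw] := ne_sh c1 _ H1L1; have h1 := shift_last c0 sw.
  have h2 : shift c0 L2 w := eq_ind _ (fun F => F w) sw _ E.
  by move: h1; rewrite (shift_last c0 h2).
rewrite cat_uniq map_inj_uniq ?U1; last exact: shift_inj.
rewrite cat_uniq map_inj_uniq ?U1; last exact: shift_inj.
case: m IH H1 U1 ne_sh d01 => [|[|p]] IH H1 U1 ne_sh d01; rewrite ?cats0 ?d01 //.
change (~~ has (mem (map (shift c0) (LB p.+2))) (map (shift c1) (LB p.+2) ++ map sstar (LB p)) &&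
  (~~ has (mem (map (shift c1) (LB p.+2))) (map sstar (LB p)) && uniq (map sstar (LB p)))).
have [H2 U2] := IH p ltac:(lia).
rewrite map_inj_uniq ?U2; last exact: sstar_inj.
rewrite has_cat negb_or d01 /= andbT; apply/andP; split; apply/hasPn => L /mapP [L' HL' ->]; apply/negP;
  have [w Lw] := H2 _ HL'.
- move=> /mapP [L2 _ E].
  have := eq_ind _ (fun F => F _) (sstar_base Lw) _ E.
  by move/(shift_last c0); rewrite last_rcons.
- move=> /mapP [L2 _ E].
  have := eq_ind _ (fun F => F _) (sstar_c0 Lw) _ E.
  by move/(shift_last c0); rewrite last_rcons.
Qed.

Lemma size_LB m : size (LB m.+1) = (2 * size (LB m) + (if m is p.+2 then size (LB p) else 0))%N.
Proof. rewrite /= !size_cat !size_map; case: m => [|[|p]] //=; rewrite ?size_map; lia. Qed.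

End CombPart.

Local Open Scope ring_scope.

Lemma unary_bound (r : rat) : 1 <= r -> r ^+ 5 <= r ^+ 4 + 1 -> r ^+ 5 <= 10 ->
  forall n, (1 <= n)%N -> 1/10 * r ^+ n <= (size (LS n))%:R.
Proof.
move=> r1 h5 h10; elim/ltn_ind => n IH n1.
have [s1 srec] := size_LS n1.
case: (leqP n 5) => hn.
  apply: (@le_trans _ _ 1); last by rewrite ler1n.
  have := ler_weXn2l r1 hn. 
  lra.
have [q eq] : exists q, n = q.+4.+2 by exists (n - 6)%N; lia.
subst n.
rewrite (srec isT) natrD.
have -> : (q.+4.+2 - 5 = q.+1)%N by lia.
have h1 := IH q.+4.+1 (ltnSn _) isT.
have h2 := IH q.+1 ltac:(lia) isT.
have hz : 0 <= r ^+ q.+1 by rewrite exprn_ge0 //; lra.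
have H' : 0 <= r ^+ q.+1 * (r ^+ 4 + 1 - r ^+ 5).
  by apply: mulr_ge0 => //; lra.
have e6 : r ^+ q.+4.+2 = r ^+ q.+1 * r ^+ 5 by rewrite -exprD; congr (_ ^+ _); lia.
have e5 : r ^+ q.+4.+1 = r ^+ q.+1 * r ^+ 4 by rewrite -exprD; congr (_ ^+ _); lia.
rewrite e6; rewrite e5 in h1.
move: h1 h2 H' hz; move: (r ^+ q.+1) (r ^+ 4) (r ^+ 5) => y a b.
move=> h1 h2 H' hz.
change (q.+2.+4.-1) with (q.+1.+4).
move: h1 h2; move: (size (LS q.+1.+4))%:R (size (LS q.+1))%:R => u v h1 h2.
lra.
Qed.

Lemma binary_bound (r : rat) : 1 <= r -> r ^+ 3 <= 2 * r ^+ 2 + 1 -> r ^+ 3 <= 10 ->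
  forall m, 1/10 * r ^+ m.+1 <= (size (LB m))%:R.
Proof.
move=> r1 h3 h10; elim/ltn_ind => m IH.
case: (leqP m 2) => hm.
  apply: (@le_trans _ _ 1); last by rewrite ler1n; case: m IH hm => [|[|[|]]].
  have := ler_weXn2l r1 (hm : (m.+1 <= 3)%N); lra.
have [q eq] : exists q, m = q.+3 by exists (m - 3)%N; lia.
subst m.
rewrite size_LB natrD natrM.
have h1 := IH q.+2 ltac:(lia).
have h2 := IH q ltac:(lia).
have hz : 0 <= r ^+ q.+1 by rewrite exprn_ge0 //; lra.
have H' : 0 <= r ^+ q.+1 * (2 * r ^+ 2 + 1 - r ^+ 3).
  by apply: mulr_ge0 => //; lra.
have e4 : r ^+ q.+4 = r ^+ q.+1 * r ^+ 3 by rewrite -exprD; congr (_ ^+ _); lia.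
have e3 : r ^+ q.+3 = r ^+ q.+1 * r ^+ 2 by rewrite -exprD; congr (_ ^+ _); lia.
rewrite e4; rewrite e3 in h1.
move: h1 h2 H' hz; move: (r ^+ q.+1) (r ^+ 2) (r ^+ 3) => y a b.
move: (size (LB q.+2))%:R (size (LB q))%:R => u v h1 h2 H' hz.
lra.
Qed.

Lemma unary_main (r : rat) : 1 <= r -> r ^+ 5 <= r ^+ 4 + 1 -> r ^+ 5 <= 10 ->
  exists c : rat, 0 < c /\ exists N : nat, forall n : nat, (N <= n)%N ->
      c * r ^+ n <= (Rcount 1 n)%:R.
Proof.
move=> r1 r5 r10.
exists (1/10); split; first lra.
exists 1%N => n n1.
apply: (le_trans (unary_bound r1 r5 r10 n1)); rewrite ler_nat.
apply: Rcount_ge; first by case: (LS_inv n).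
move=> L /LS_real [t [lt st]]; by exists (ETerm t).
Qed.

Lemma binary_main (r : rat) : 1 <= r -> r ^+ 3 <= 2 * r ^+ 2 + 1 -> r ^+ 3 <= 10 ->
  exists c : rat, 0 < c /\ exists N : nat, forall n : nat, (N <= n)%N ->
      c * r ^+ n <= (Rcount 2 n)%:R.
Proof.
move=> r1 r3 r10.
exists (1/10); split; first lra.
exists 1%N => -[//|m] _.
apply: (le_trans (binary_bound r1 r3 r10 m)); rewrite ler_nat.
apply: Rcount_ge; first by case: (LB_inv m).
move=> L /LB_real [t [lt st]]; by exists (ETerm t).
Qed.

Theorem mainTheorem1 :
  (exists c : rat, 0 < c /\ exists N : nat, forall n : nat, (N <= n)%N ->
      c * (13247%:R / 10000%:R) ^+ n <= (Rcount 1 n)%:R) /\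
  (exists c : rat, 0 < c /\ exists N : nat, forall n : nat, (N <= n)%N ->
      c * (2102374%:R / 1000000%:R) ^+ n <= (Rcount 2 n)%:R).
Proof.
split; [apply: unary_main | apply: binary_main]; lra.
Qed.
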